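(* Let $I,I',I'':B_0(\Sigma)\to\mathbb{R}$ be monotonic and constant-linear with $I'\le I''$ (pointwise on $B_0(\Sigma)$). Then the following are equivalent: (i) for all $\phi,\varphi\in B_0(\Sigma)$, if $I'(\phi)>I'(\varphi)$ and $I''(\phi)>I''(\varphi)$, then $I(\phi)>I(\varphi)$; (ii) there exists $\alpha\in[0,1]$ such that $I(\varphi)=\alpha I'(\varphi)+(1-\alpha)I''(\varphi)$ for all $\varphi\in B_0(\Sigma)$.
   Context: $(S,\Sigma)$ is a set with an algebra of subsets; $B_0(\Sigma)$ is the set of real-valued $\Sigma$-measurable simple functions on $S$. A functional $I:B_0(\Sigma)\to\mathbb{R}$ is constant-linear if $I(a\varphi+b)=aI(\varphi)+b$ for all $\varphi\in B_0(\Sigma)$, $a\ge 0$, $b\in\mathbb{R}$ (where $b$ denotes the constant function), and monotonic if $\varphi\ge\psi$ pointwise implies $I(\varphi)\ge I(\psi)$. *)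

(* Defs.v *)
From Stdlib Require Export Reals List.
Open Scope R_scope.
Set Implicit Arguments.

Record is_algebra (S : Type) (Sigma : (S -> Prop) -> Prop) : Prop := {
  alg_empty : Sigma (fun _ => False);
  alg_compl : forall A, Sigma A -> Sigma (fun s => ~ A s);
  alg_union : forall A B, Sigma A -> Sigma B -> Sigma (fun s => A s \/ B s)
}.

Definition B0 (S : Type) (Sigma : (S -> Prop) -> Prop) (f : S -> R) : Prop :=
  (exists l : list R, forall s, In (f s) l) /\
  (forall r : R, Sigma (fun s => f s = r)).

(* Functionals are given as total maps on S -> R; only their values on B0
   matter, all properties are quantified over B0. *)
Definition constant_linear (S : Type) (Sigma : (S -> Prop) -> Prop)
  (I : (S -> R) -> R) : Prop :=
  forall (phi : S -> R) (a b : R), B0 Sigma phi -> 0 <= a ->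
    I (fun s => a * phi s + b) = a * I phi + b.

Definition monotonic (S : Type) (Sigma : (S -> Prop) -> Prop)
  (I : (S -> R) -> R) : Prop :=
  forall phi psi : S -> R, B0 Sigma phi -> B0 Sigma psi ->
    (forall s, psi s <= phi s) -> I psi <= I phi.

(* Main.v *)
Require Import Defs.
From Stdlib Require Import Reals Lra List FunctionalExtensionality PropExtensionality Classical.

Lemma B0_affine (S : Type) (Sigma : (S -> Prop) -> Prop) (HSigma : is_algebra Sigma)
  (phi : S -> R) (a b : R) : B0 Sigma phi -> B0 Sigma (fun s => a * phi s + b).
Proof.
  intros [[l Hl] Hm]. split.
  - exists (map (fun x => a * x + b) l). intro s. apply (in_map (fun x => a * x + b)). apply Hl.
  - intro r. destruct (Req_EM_T a 0) as [Ha|Ha].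
    + subst a. destruct (Req_EM_T b r) as [Hb|Hb].
      * replace (fun s => 0 * phi s + b = r) with (fun s : S => ~ False).
        { apply (alg_compl HSigma). apply (alg_empty HSigma). }
        apply functional_extensionality; intro s; apply propositional_extensionality; split; intros _; [lra|tauto].
      * replace (fun s => 0 * phi s + b = r) with (fun s : S => False).
        { apply (alg_empty HSigma). }
        apply functional_extensionality; intro s; apply propositional_extensionality; split; [tauto| intro; lra].
    + replace (fun s => a * phi s + b = r) with (fun s => phi s = (r - b) / a).
      { apply Hm. }
      apply functional_extensionality; intro s; apply propositional_extensionality; split; intro H.
      * rewrite H. field. auto.
      * rewrite <- H. field. auto.
Qed.

Theorem lemma7 (S : Type) (Sigma : (S -> Prop) -> Prop) (HSigma : is_algebra Sigma)
  (I I' I'' : (S -> R) -> R)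
  (HIm : monotonic Sigma I) (HIl : constant_linear Sigma I)
  (HI'm : monotonic Sigma I') (HI'l : constant_linear Sigma I')
  (HI''m : monotonic Sigma I'') (HI''l : constant_linear Sigma I'')
  (Hle : forall phi, B0 Sigma phi -> I' phi <= I'' phi) :
  (forall phi vphi : S -> R, B0 Sigma phi -> B0 Sigma vphi ->
     I' phi > I' vphi -> I'' phi > I'' vphi -> I phi > I vphi)
  <->
  (exists alpha : R, 0 <= alpha <= 1 /\
     forall vphi : S -> R, B0 Sigma vphi ->
       I vphi = alpha * I' vphi + (1 - alpha) * I'' vphi).
Proof.
  split.
  - intro H.
    assert (Bounds : forall phi, B0 Sigma phi -> I' phi <= I phi <= I'' phi).
    { intros phi Hphi. pose proof (Hle phi Hphi).
      assert (Hc : forall e, B0 Sigma (fun s => 0 * phi s + e) /\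
                 I (fun s => 0 * phi s + e) = e /\ I' (fun s => 0 * phi s + e) = e /\
                 I'' (fun s => 0 * phi s + e) = e).
      { intro e. split; [apply B0_affine; auto|].
        rewrite HIl, HI'l, HI''l by (auto; lra). repeat split; ring. }
      split; apply Rnot_gt_le; intro Hg.
      - destruct (Hc ((I phi + I' phi)/2)) as (HB & E1 & E2 & E3).
        assert (I phi > I (fun s => 0 * phi s + (I phi + I' phi)/2)).
        { apply H; auto; lra. }
        lra.
      - destruct (Hc ((I phi + I'' phi)/2)) as (HB & E1 & E2 & E3).
        assert (I (fun s => 0 * phi s + (I phi + I'' phi)/2) > I phi).
        { apply H; auto; lra. }
        lra. }
    assert (Key : forall phi psi, B0 Sigma phi -> B0 Sigma psi ->
      I' phi < I'' phi -> I' psi < I'' psi ->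
      (I phi - I' phi) / (I'' phi - I' phi) <= (I psi - I' psi) / (I'' psi - I' psi)).
    { intros phi psi Hphi Hpsi Gphi Gpsi.
      set (c := I' phi). set (d := I'' phi). set (c' := I' psi). set (d' := I'' psi).
      assert (Gcd : c < d) by exact Gphi. assert (Gcd' : c' < d') by exact Gpsi.
      set (bp := (I phi - c) / (d - c)). set (bq := (I psi - c') / (d' - c')).
      apply Rnot_gt_le; intro Hg.
      set (a1 := 1 / (d - c)). set (b1 := - c / (d - c)).
      set (a2 := 1 / (d' - c')). set (b2 := - c' / (d' - c') + (bp - bq)).
      assert (Ha1 : 0 <= a1) by (unfold a1; apply Rlt_le, Rdiv_lt_0_compat; lra).
      assert (Ha2 : 0 <= a2) by (unfold a2; apply Rlt_le, Rdiv_lt_0_compat; lra).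
      assert (HH : I (fun s => a2 * psi s + b2) > I (fun s => a1 * phi s + b1)).
      { apply H; try (apply B0_affine; auto).
        - rewrite HI'l, HI'l by auto. fold c c'. unfold a1, b1, a2, b2.
          replace (1 / (d' - c') * c' + (- c' / (d' - c') + (bp - bq))) with (bp - bq) by (field; lra).
          replace (1 / (d - c) * c + - c / (d - c)) with 0 by (field; lra). lra.
        - rewrite HI''l, HI''l by auto. fold d d'. unfold a1, b1, a2, b2.
          replace (1 / (d' - c') * d' + (- c' / (d' - c') + (bp - bq))) with (1 + (bp - bq)) by (field; lra).
          replace (1 / (d - c) * d + - c / (d - c)) with 1 by (field; lra). lra. }
      rewrite HIl, HIl in HH by auto.
      unfold a1, b1, a2, b2 in HH.
      replace (1 / (d' - c') * I psi + (- c' / (d' - c') + (bp - bq))) with (bq + (bp - bq)) in HH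
        by (unfold bq; field; lra).
      replace (1 / (d - c) * I phi + - c / (d - c)) with bp in HH by (unfold bp; field; lra).
      lra. }
    destruct (classic (exists phi0, B0 Sigma phi0 /\ I' phi0 < I'' phi0)) as [[phi0 [H0 G0]]|Hno].
    + exists (1 - (I phi0 - I' phi0) / (I'' phi0 - I' phi0)).
      pose proof (Bounds phi0 H0).
      split.
      * split.
        -- cut ((I phi0 - I' phi0) / (I'' phi0 - I' phi0) <= 1). lra.
           apply Rmult_le_reg_r with (I'' phi0 - I' phi0); [lra|].
           field_simplify; lra.
        -- cut (0 <= (I phi0 - I' phi0) / (I'' phi0 - I' phi0)). lra.
           apply Rle_mult_inv_pos; lra.
      * intros v Hv. pose proof (Bounds v Hv).
        destruct (Req_EM_T (I' v) (I'' v)) as [E|E].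
        -- assert (Ev : I v = I' v) by lra. rewrite Ev, <- E. ring.
        -- assert (G : I' v < I'' v) by (pose proof (Hle v Hv); lra).
           pose proof (Key phi0 v H0 Hv G0 G). pose proof (Key v phi0 Hv H0 G G0).
           assert (Eq : (I phi0 - I' phi0) / (I'' phi0 - I' phi0) = (I v - I' v) / (I'' v - I' v)) by lra.
           rewrite Eq. field. lra.
    + exists 0. split; [lra|]. intros v Hv. pose proof (Bounds v Hv).
      assert (I' v = I'' v).
      { destruct (Rle_lt_or_eq_dec _ _ (Hle v Hv)); auto. exfalso; apply Hno; eauto. }
      assert (Ev : I v = I'' v) by lra. rewrite Ev. ring.
  - intros [alpha [Ha Hv]] phi vphi Hphi Hvphi G1 G2.
    rewrite (Hv phi Hphi), (Hv vphi Hvphi).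
    assert (0 <= alpha * (I' phi - I' vphi)) by (apply Rmult_le_pos; lra).
    assert (0 <= (1 - alpha) * (I'' phi - I'' vphi)) by (apply Rmult_le_pos; lra).
    destruct (Req_EM_T alpha 0) as [E|E].
    + subst alpha. lra.
    + assert (0 < alpha * (I' phi - I' vphi)) by (apply Rmult_lt_0_compat; lra). lra.
Qed.
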